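(* Let $3 \leq r \leq s \leq t$ be integers. Then for sufficiently large $n$, \[ \mathrm{ex}_r ( n , \textup{Berge-}K_{s,t} ) = O \big( n^{ r - \frac{r (r - 1) }{2s} } \big), \] where the implied constant depends only on $r,s,t$.
   Context: A hypergraph $H$ is a Berge-$F$ (for a graph $F$) if there is a bijection $f : E(F) \to E(H)$ with $e \subseteq f(e)$ for every $e \in E(F)$. $\mathrm{ex}_r(n,\textup{Berge-}F)$ is the maximum number of edges in an $n$-vertex $r$-uniform hypergraph containing no subhypergraph that is a Berge-$F$. *)

(* Defs.v *)
From mathcomp Require Import all_boot.
Set Implicit Arguments.
Unset Strict Implicit.
Unset Printing Implicit Defensive.

Definition uniform (r n : nat) (H : {set {set 'I_n}}) : bool :=
  [forall e in H, #|e| == r].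

(* A graph F is given by a finite vertex type V and an edge set E of
   2-element subsets of V. *)
Definition has_berge (V : finType) (E : {set {set V}}) (n : nat)
    (H : {set {set 'I_n}}) : bool :=
  [exists phi : {ffun V -> 'I_n}, exists g : {ffun {set V} -> {set 'I_n}},
     [&& injectiveb phi, dinjectiveb g E,
         [forall e in E, g e \in H] &
         [forall e in E, (phi @: e) \subset g e]]].

Definition ex_berge (r : nat) (V : finType) (E : {set {set V}}) (n : nat) : nat :=
  \max_(H : {set {set 'I_n}} | uniform r H && ~~ has_berge E H) #|H|.

Definition Kst_edges (s t : nat) : {set {set ('I_s + 'I_t)%type}} :=
  [set [set inl i; inr j] | i : 'I_s, j : 'I_t].

(* Main.v *)
Require Import Defs.
From HB Require Import structures.
From mathcomp Require Import all_boot zify.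
From Stdlib Require Import Reals Lra.
Import ssrnat.
Set Implicit Arguments.
Unset Strict Implicit.

HB.instance Definition _ := Monoid.isComLaw.Build R 0%R Rplus
  (fun x y z => esym (Rplus_assoc x y z)) Rplus_comm Rplus_0_l.
Definition clique n (adj : rel 'I_n) (Q : {set 'I_n}) :=
  [forall x in Q, forall y in Q, (x != y) ==> adj x y].
Definition cliques n (adj : rel 'I_n) (m : nat) (U : {set 'I_n}) :=
  [set Q : {set 'I_n} | (Q \subset U) && (#|Q| == m) && clique adj Q].
Definition nbhd n (adj : rel 'I_n) (U : {set 'I_n}) (v : 'I_n) :=
  [set u in U | adj v u].
Definition Kfree n (adj : rel 'I_n) (s t : nat) (U : {set 'I_n}) :=
  forall A B : {set 'I_n}, A \subset U -> B \subset U -> #|A| = s -> t <= #|B| ->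
    ~ (forall a b, a \in A -> b \in B -> adj a b).

Lemma card_bigcup_le (T I : finType) (P : pred I) (F : I -> {set T}) :
  #|\bigcup_(i | P i) F i| <= \sum_(i | P i) #|F i|.
Proof.
apply: (big_ind2 (fun (A : {set T}) k => #|A| <= k)).
- by rewrite cards0.
- move=> A k B l hA hB; apply: leq_trans (leq_card_setU A B) _; exact: leq_add.
- by [].
Qed.

Lemma card_sub_sum (T : finType) (A : {set T}) (P : pred T) :
  #|[set x in A | P x]| = \sum_(x in A) (P x : nat).
Proof.
rewrite -sum1_card big_mkcond [RHS]big_mkcond /=.
by apply: eq_bigr => x _; rewrite inE; case: (x \in A); case: (P x).
Qed.

Lemma double_count (T T' : finType) (U : {set T}) (X : {set T'}) (R : T -> T' -> bool) :
  \sum_(v in U) #|[set S in X | R v S]| = \sum_(S in X) #|[set v in U | R v S]|.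
Proof.
under eq_bigr do rewrite card_sub_sum.
rewrite exchange_big /=.
by apply: eq_bigr => S _; rewrite card_sub_sum.
Qed.

Lemma cliques_step n (adj : rel 'I_n) m (U : {set 'I_n}) :
  #|cliques adj m.+1 U| <= \sum_(v in U) #|cliques adj m (nbhd adj U v)|.
Proof.
have h2 := card_bigcup_le (mem U) (fun v => (fun Q => v |: Q) @: cliques adj m (nbhd adj U v)).
have h3 : \sum_(v in U) #|(fun Q => v |: Q) @: cliques adj m (nbhd adj U v)|
   <= \sum_(v in U) #|cliques adj m (nbhd adj U v)|.
  apply: leq_sum => v _; exact: leq_imset_card.
apply: leq_trans h3; apply: leq_trans h2.
  apply: subset_leq_card; apply/subsetP => Q.
  rewrite inE => /andP [/andP [QU /eqP cQ] clQ].
  have : 0 < #|Q| by rewrite cQ.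
  case/card_gt0P => v vQ.
  apply/bigcupP; exists v; first exact: (subsetP QU).
  apply/imsetP; exists (Q :\ v); last by rewrite setD1K.
  rewrite inE; apply/andP; split; first (apply/andP; split).
  - apply/subsetP => x; rewrite !inE => /andP [xv xQ].
    rewrite (subsetP QU) //=.
    by move/forallP: clQ => /(_ v); rewrite vQ /= => /forallP /(_ x); rewrite xQ eq_sym xv.
  - apply/eqP; have := cardsD1 v Q; rewrite vQ cQ add1n; by case.
  - apply/forallP => x; apply/implyP => xQ; apply/forallP => y; apply/implyP => yQ.
    move: xQ yQ; rewrite !inE => /andP [_ xQ] /andP [_ yQ].
    by move/forallP: clQ => /(_ x); rewrite xQ => /forallP /(_ y); rewrite yQ.
Qed.

Lemma cliques_empty n (adj : rel 'I_n) m (U : {set 'I_n}) : 0 < m -> #|U| = 0 -> #|cliques adj m U| = 0.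
Proof.
move=> hm hU; apply: eq_card0 => Q; rewrite inE.
apply/negP => /andP [/andP [QU /eqP cQ] _].
have := subset_leq_card QU; rewrite hU cQ; lia.
Qed.

Lemma cliques1 n (adj : rel 'I_n) (U : {set 'I_n}) : #|cliques adj 1 U| = #|U|.
Proof.
have -> : cliques adj 1 U = (set1) @: U.
  apply/setP => Q; rewrite inE; apply/idP/imsetP.
  - move=> /andP [/andP [QU /cards1P [x Qx]] _]; exists x; last by [].
    by rewrite -sub1set -Qx.
  - move=> [x xU ->]; rewrite sub1set xU cards1 /=.
    apply/forallP => a; apply/implyP; rewrite inE => /eqP ->.
    apply/forallP => b; apply/implyP; rewrite inE => /eqP ->; by rewrite eqxx.
by rewrite card_imset //; exact: set1_inj.
Qed.

Lemma Kfree_nbhd n (adj : rel 'I_n) s t (U : {set 'I_n}) v : irreflexive adj -> v \in U ->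
  Kfree adj s.+1 t U -> Kfree adj s t (nbhd adj U v).
Proof.
move=> irr vU hK A B AN BN cA cB hAB.
have vA : v \notin A.
  apply/negP => vA; have := subsetP AN v vA; rewrite inE irr; by case/andP.
have sub : forall X : {set 'I_n}, X \subset nbhd adj U v -> X \subset U.
  move=> X /subsetP XN; apply/subsetP => x /XN; rewrite inE; by case/andP.
apply: (hK (v |: A) B).
- by rewrite subUset sub1set vU sub.
- exact: sub.
- by rewrite cardsU1 vA cA.
- exact: cB.
- move=> a b; rewrite !inE => /orP [/eqP -> | aA] bB; last exact: hAB.
  by have := subsetP BN b bB; rewrite inE => /andP [].
Qed.
Lemma kst n (adj : rel 'I_n) s t (U : {set 'I_n}) : symmetric adj -> Kfree adj s t U ->
  \sum_(v in U) 'C(#|nbhd adj U v|, s) <= t * 'C(#|U|, s).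
Proof.
move=> sym hK.
set X := [set S : {set 'I_n} | S \subset U & #|S| == s].
have e1 : forall v, 'C(#|nbhd adj U v|, s) = #|[set S in X | S \subset nbhd adj U v]|.
  move=> v; rewrite -cards_draws; apply: eq_card => S; rewrite !inE.
  case SN: (S \subset nbhd adj U v); rewrite ?andbT ?andbF //=.
  have -> : S \subset U.
    apply: subset_trans SN _; apply/subsetP => x; rewrite inE; by case/andP.
  by [].
under eq_bigr do rewrite e1.
rewrite (double_count U X (fun v S => S \subset nbhd adj U v)).
apply: leq_trans (_ : \sum_(S in X) t <= _).
  apply: leq_sum => S; rewrite inE => /andP [SU /eqP cS].
  rewrite leqNgt; apply/negP => hlt.
  apply: (hK S [set v in U | S \subset nbhd adj U v]) => //.
  - apply/subsetP => x; rewrite inE; by case/andP.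
  - exact: ltnW.
  - move=> a b aS; rewrite inE => /andP [bU /subsetP SN].
    have := SN a aS; rewrite inE => /andP [_ hba]; by rewrite sym.
by rewrite sum_nat_const cards_draws mulnC.
Qed.

Lemma pow_ffact d k : k <= d -> d ^ k <= k ^ k * d ^_ k.
Proof.
move=> hkd.
have e : forall x, x ^ k = \prod_(i < k) x by move=> x; rewrite prod_nat_const card_ord.
rewrite ffact_prod !e -big_split /=.
apply: leq_prod => i _.
have := ltn_ord i; nia.
Qed.

Lemma pow_bin d k : d ^ k <= k ^ k * (k`! * 'C(d, k) + 1).
Proof.
case: (leqP k d) => hkd.
  apply: leq_trans (pow_ffact hkd) _.
  rewrite -bin_ffact; apply: leq_mul => //; rewrite mulnC; lia.
apply: leq_trans (_ : k ^ k <= _).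
  rewrite leq_exp2r; lia.
rewrite -{1}(muln1 (k ^ k)); apply: leq_mul => //; lia.
Qed.

Lemma bin_le_pow N k : 'C(N, k) <= N ^ k.
Proof.
apply: leq_trans (_ : N ^_ k <= _).
  rewrite -bin_ffact; apply: leq_pmulr; exact: fact_gt0.
have e : forall x, x ^ k = \prod_(i < k) x by move=> x; rewrite prod_nat_const card_ord.
rewrite ffact_prod e.
apply: leq_prod => i _; exact: leq_subr.
Qed.

Lemma kst_pow n (adj : rel 'I_n) s t (U : {set 'I_n}) : 0 < s -> symmetric adj -> Kfree adj s t U ->
  \sum_(v in U) #|nbhd adj U v| ^ s <= s ^ s * (s`! * t + 1) * #|U| ^ s.
Proof.
move=> hs sym hK.
apply: leq_trans (_ : \sum_(v in U) (s ^ s * (s`! * 'C(#|nbhd adj U v|, s) + 1)) <= _).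
  apply: leq_sum => v _; exact: pow_bin.
rewrite -big_distrr /= big_split /= -big_distrr /= sum_nat_const.
have h1 := kst sym hK.
have h2 := bin_le_pow #|U| s.
have h3 : #|U| * 1 <= #|U| ^ s.
  rewrite muln1; case: #|U| => // N; rewrite -{1}(expn1 N.+1); apply: leq_pexp2l => //.
rewrite -mulnA; apply: leq_mul => //.
rewrite mulnDl mul1n -mulnA; apply: leq_add => //.
apply: leq_mul => //; apply: leq_trans h1 _; apply: leq_mul => //.
Qed.
Open Scope R_scope.
Lemma tangent_norm (z th : R) : 0 < z -> 0 < th <= 1 ->
  Rpower z th <= 1 + th * (z - 1).
Proof.
move=> hz [h0 h1].
set w := Rpower z th.
have hw : 0 < w by rewrite /w /Rpower; apply: exp_pos.
set p := / th.
have hp : th * p = 1 by rewrite /p; field; lra.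
have hp1 : 1 <= p.
  rewrite /p -Rinv_1; apply: Rinv_le_contravar; lra.
have hzw : z = w * Rpower w (p - 1).
  rewrite -{1}(Rpower_1 w) // -Rpower_plus.
  have -> : 1 + (p - 1) = p by ring.
  by rewrite /w Rpower_mult hp Rpower_1.
have e1 : 1 + (p - 1) * ln w <= Rpower w (p - 1).
  rewrite /Rpower; apply: exp_ineq1_le.
have e2 : 1 - / w <= ln w.
  have := exp_ineq1_le (ln (/ w)).
  rewrite exp_ln; last by apply: Rinv_0_lt_compat.
  rewrite ln_Rinv //; lra.
have e3 : (p - 1) * (1 - / w) <= (p - 1) * ln w.
  apply: Rmult_le_compat_l; lra.
have e4 : w * (1 + (p - 1) * (1 - / w)) <= z.
  rewrite hzw; apply: Rmult_le_compat_l; lra.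
have e5 : w * (1 + (p - 1) * (1 - / w)) = w + (p - 1) * (w - 1).
  field; lra.
rewrite e5 in e4.
have : w - 1 <= th * (z - 1).
  have : th * (z - 1) >= th * (p * (w - 1)).
    apply: Rmult_ge_compat_l; lra.
  have -> : th * (p * (w - 1)) = w - 1 by rewrite -Rmult_assoc hp; ring.
  lra.
lra.
Qed.

Lemma tangent (x mu th : R) : 0 < x -> 0 < mu -> 0 < th <= 1 ->
  Rpower x th <= Rpower mu th + th * Rpower mu (th - 1) * (x - mu).
Proof.
move=> hx hmu hth.
have hxm : x = (x / mu) * mu by field; lra.
have hpos : 0 < x / mu by apply: Rdiv_lt_0_compat.
rewrite {1}hxm -Rpower_mult_distr //.
have hm1 : Rpower mu (th - 1) = Rpower mu th / mu.
  rewrite /Rminus Rpower_plus Rpower_Ropp Rpower_1 //.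
have hmu' : 0 < Rpower mu th by rewrite /Rpower; apply: exp_pos.
have h := @tangent_norm (x / mu) th hpos hth.
rewrite hm1.
have -> : Rpower mu th + th * (Rpower mu th / mu) * (x - mu)
   = (1 + th * (x / mu - 1)) * Rpower mu th by field; lra.
apply: Rmult_le_compat_r; lra.
Qed.
Close Scope R_scope.

Lemma INR_sum (T : finType) (U : {set T}) (f : T -> nat) :
  INR (\sum_(v in U) f v) = \big[Rplus/0%R]_(v in U) INR (f v).
Proof. by apply: (big_morph INR plus_INR). Qed.

Lemma rsum_le (T : finType) (U : {set T}) (F G : T -> R) :
  (forall v, v \in U -> (F v <= G v)%R) ->
  (\big[Rplus/0%R]_(v in U) F v <= \big[Rplus/0%R]_(v in U) G v)%R.
Proof.
move=> h; apply: (big_ind2 (fun x y => (x <= y)%R)) => //.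
- exact: Rle_refl.
- move=> *; exact: Rplus_le_compat.
Qed.

Lemma rsum_const (T : finType) (U : {set T}) (c : R) :
  \big[Rplus/0%R]_(v in U) c = (INR #|U| * c)%R.
Proof.
rewrite big_const; elim: #|U| => [|k IH]; first (simpl; ring).
rewrite iterS IH S_INR; ring.
Qed.

Lemma rsum_scale (T : finType) (U : {set T}) (c : R) (x : T -> R) :
  \big[Rplus/0%R]_(v in U) (c * x v)%R = (c * \big[Rplus/0%R]_(v in U) x v)%R.
Proof.
symmetry; apply: (big_morph (Rmult c)).
- move=> a b; ring.
- ring.
Qed.

Lemma rsum_affine (T : finType) (U : {set T}) (c dd : R) (x : T -> R) :
  \big[Rplus/0%R]_(v in U) (c + dd * x v)%R
    = (INR #|U| * c + dd * \big[Rplus/0%R]_(v in U) x v)%R.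
Proof. by rewrite big_split /= rsum_const rsum_scale. Qed.

Lemma INR_expn a b : INR (a ^ b)%N = (INR a ^ b)%R.
Proof. elim: b => [|b IH]; first by rewrite expn0. by rewrite expnS mult_INR IH. Qed.

Definition fexp (m s : nat) : R := (INR m - INR m * (INR m - 1) / (2 * INR s))%R.

Lemma Rpower_pos x y : (0 < Rpower x y)%R.
Proof. rewrite /Rpower; exact: exp_pos. Qed.

Lemma fexp_bounds m s : (0 < m)%N -> (m <= s)%N ->
  (0 < fexp m s)%R /\ (fexp m s <= INR m)%R.
Proof.
move=> h1 h2.
have hm : (1 <= INR m)%R by apply: (le_INR 1); apply/leP.
have hs : (INR m <= INR s)%R by apply: le_INR; apply/leP.
set q := (INR m * (INR m - 1) / (2 * INR s))%R.
have hq : (q * (2 * INR s) = INR m * (INR m - 1))%R by rewrite /q; field; lra.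
rewrite /fexp -/q.
have q0 : (0 <= q)%R.
  apply: Rmult_le_pos; first nra.
  apply: Rlt_le; apply: Rinv_0_lt_compat; lra.
split; last lra.
have : (q * (2 * INR s) <= INR s * (INR m - 1))%R by rewrite hq; nra.
nra.
Qed.

Lemma AS (t : nat) : forall m s, (0 < m)%N -> (m <= s)%N ->
  exists C : R, (0 < C)%R /\
  forall n (adj : rel 'I_n) (U : {set 'I_n}), symmetric adj -> irreflexive adj ->
    Kfree adj s t U ->
    (INR #|cliques adj m U| <= C * Rpower (INR #|U|) (fexp m s))%R.
Proof.
elim => [|m IH] s // _ hms.
case: m IH hms => [|m] IH hms.
  exists 1%R; split; first lra.
  move=> n adj U _ _ _; rewrite cliques1.
  case hN: #|U| => [|N].
    rewrite Rmult_1_l; apply: Rlt_le; exact: Rpower_pos.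
  have -> : fexp 1 s = 1%R by rewrite /fexp /=; field; apply: not_0_INR; lia.
  rewrite Rpower_1; first lra.
  apply: lt_0_INR; apply/ltP; lia.
case: s hms => [|s'] hms //.
have hms' : (m.+1 <= s')%N by lia.
have [C [hC hb]] := IH s' (ltn0Sn m) hms'.
set K0 := (s'.+1 ^ s'.+1 * (s'.+1`! * t + 1))%N.
set K := INR K0.
have hK0 : (0 < K)%R.
  rewrite /K /K0; apply: lt_0_INR; apply/ltP.
  rewrite muln_gt0 expn_gt0 /=; lia.
have [ha0 ha1] := fexp_bounds (ltn0Sn m) hms'.
set a := fexp m.+1 s' in ha0 ha1 *.
set th := (a / INR s'.+1)%R.
have hs0 : (0 < INR s'.+1)%R by apply: lt_0_INR; apply/ltP.
have hmS : (INR m.+1 <= INR s')%R by apply: le_INR; apply/leP.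
have hS1 : INR s'.+1 = (INR s' + 1)%R by rewrite S_INR.
have hth : (0 < th <= 1)%R.
  rewrite /th; split; first by apply: Rdiv_lt_0_compat.
  rewrite /Rdiv; apply: (Rle_trans _ (INR s'.+1 * / INR s'.+1)).
    apply: Rmult_le_compat_r; first (apply: Rlt_le; exact: Rinv_0_lt_compat).
    rewrite -/a; lra.
  rewrite Rinv_r; lra.
exists (C * Rpower K th)%R; split.
  apply: Rmult_lt_0_compat => //; exact: Rpower_pos.
move=> n adj U sym irr hKf.
case hN: #|U| => [|N].
  rewrite cliques_empty // /=.
  apply: Rlt_le; apply: Rmult_lt_0_compat; last exact: Rpower_pos.
  apply: Rmult_lt_0_compat => //; exact: Rpower_pos.
set NR := INR N.+1.
have hNR : (0 < NR)%R by apply: lt_0_INR; apply/ltP.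
pose d v := #|nbhd adj U v|.
pose g v := if d v == 0%N then 0%R else Rpower (INR (d v)) a.
set mu := (K * NR ^ s')%R.
have hmu : (0 < mu)%R by apply: Rmult_lt_0_compat => //; apply: pow_lt.
have step1 : (INR #|cliques adj m.+2 U|
    <= \big[Rplus/0%R]_(v in U) INR #|cliques adj m.+1 (nbhd adj U v)|)%R.
  rewrite -INR_sum; apply: le_INR; apply/leP; exact: cliques_step.
have step2 : (\big[Rplus/0%R]_(v in U) INR #|cliques adj m.+1 (nbhd adj U v)|
    <= \big[Rplus/0%R]_(v in U) (C * g v))%R.
  apply: rsum_le => v vU; rewrite /g.
  case: eqP => hd.
    rewrite cliques_empty //; simpl; lra.
  exact: (hb n adj (nbhd adj U v) sym irr (Kfree_nbhd irr vU hKf)).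
rewrite rsum_scale in step2.
have hmu1 : (Rpower mu (th - 1) * mu = Rpower mu th)%R.
  rewrite /Rminus Rpower_plus Rpower_Ropp Rpower_1 //; field; lra.
have tang : forall v, v \in U -> (g v <= (Rpower mu th - th * Rpower mu (th - 1) * mu)
    + (th * Rpower mu (th - 1)) * (INR (d v) ^ s'.+1))%R.
  move=> v vU; rewrite /g; case: eqP => hd.
    have -> : (th * Rpower mu (th - 1) * mu = th * Rpower mu th)%R by rewrite Rmult_assoc hmu1.
    have := Rpower_pos mu th; have := Rpower_pos mu (th - 1).
    have := pow_le (INR (d v)) s'.+1 (pos_INR _).
    move=> h1 h2 h3.
    have : (0 <= th * Rpower mu (th - 1) * INR (d v) ^ s'.+1)%R.
      apply: Rmult_le_pos => //; apply: Rmult_le_pos; lra.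
    nra.
  have hdp : (0 < INR (d v))%R by apply: lt_0_INR; apply/ltP; lia.
  have -> : Rpower (INR (d v)) a = Rpower (INR (d v) ^ s'.+1) th.
    rewrite -Rpower_pow // Rpower_mult /th; congr Rpower; field; lra.
  have := tangent (pow_lt _ s'.+1 hdp) hmu hth; lra.
have step3 : (\big[Rplus/0%R]_(v in U) g v <= NR * Rpower mu th)%R.
  apply: Rle_trans (rsum_le tang) _.
  rewrite rsum_affine hN -/NR.
  have hsum : (\big[Rplus/0%R]_(v in U) (INR (d v) ^ s'.+1)%R <= NR * mu)%R.
    have -> : \big[Rplus/0%R]_(v in U) (INR (d v) ^ s'.+1)%R
        = INR (\sum_(v in U) (d v) ^ s'.+1)%N.
      rewrite INR_sum; apply: eq_bigr => v _; by rewrite INR_expn.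
    have -> : (NR * mu = INR (K0 * N.+1 ^ s'.+1))%R.
      rewrite mult_INR INR_expn /mu /K -/NR; simpl; ring.
    apply: le_INR; apply/leP; rewrite -hN; exact: kst_pow.
  have hc : (0 <= th * Rpower mu (th - 1))%R.
    apply: Rmult_le_pos; first lra; apply: Rlt_le; exact: Rpower_pos.
  have := Rmult_le_compat_l _ _ _ hc hsum.
  have -> : (th * Rpower mu (th - 1) * mu = th * Rpower mu th)%R by rewrite Rmult_assoc hmu1.
  nra.
have step4 : (NR * Rpower mu th = Rpower K th * Rpower NR (fexp m.+2 s'.+1))%R.
  have e1 : Rpower mu th = (Rpower K th * Rpower (NR ^ s') th)%R.
    rewrite /mu Rpower_mult_distr //; by apply: pow_lt.
  have e2 : Rpower (NR ^ s') th = Rpower NR (INR s' * th).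
    by rewrite -Rpower_pow // Rpower_mult.
  have e3 : (NR * Rpower NR (INR s' * th) = Rpower NR (1 + INR s' * th))%R.
    by rewrite Rpower_plus Rpower_1.
  have e4 : (1 + INR s' * th = fexp m.+2 s'.+1)%R.
    rewrite /th /a /fexp !S_INR; field.
    rewrite S_INR in hmS; have := pos_INR m; lra.
  rewrite e1 e2 -e4 -e3; ring.
apply: Rle_trans step1 _; apply: Rle_trans step2 _.
rewrite -/NR Rmult_assoc -step4.
apply: Rmult_le_compat_l; lra.
Qed.

Lemma berge_of n (H : {set {set 'I_n}}) s t (A B : {set 'I_n})
    (h : 'I_n -> 'I_n -> {set 'I_n}) :
  (0 < s)%N -> (0 < t)%N -> #|A| = s -> #|B| = t -> [disjoint A & B] ->
  (forall a b, a \in A -> b \in B -> (h a b \in H) && ([set a; b] \subset h a b)) ->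
  (forall a b a' b', a \in A -> b \in B -> a' \in A -> b' \in B ->
     h a b = h a' b' -> a = a' /\ b = b') ->
  has_berge (Kst_edges s t) H.
Proof.
move=> hs ht hA hB dAB hH hinj.
pose fa (i : 'I_s) := enum_val (cast_ord (esym hA) i).
pose fb (j : 'I_t) := enum_val (cast_ord (esym hB) j).
have faA : forall i, fa i \in A by move=> i; exact: enum_valP.
have fbB : forall j, fb j \in B by move=> j; exact: enum_valP.
have fa_inj : injective fa.
  by move=> i i' /enum_val_inj /cast_ord_inj.
have fb_inj : injective fb.
  by move=> i i' /enum_val_inj /cast_ord_inj.
have fab : forall i j, fa i != fb j.
  move=> i j; apply/eqP => e; have := disjointFr dAB (faA i).
  by rewrite e fbB.
pose phi : {ffun ('I_s + 'I_t)%type -> 'I_n} := [ffun x => match x with inl i => fa i | inr j => fb j end].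
pose i0 : 'I_s := Ordinal hs.
pose j0 : 'I_t := Ordinal ht.
pose gi (e : {set ('I_s + 'I_t)%type}) := odflt i0 [pick i | inl i \in e].
pose gj (e : {set ('I_s + 'I_t)%type}) := odflt j0 [pick j | inr j \in e].
have giE : forall i j, gi [set inl i; inr j] = i.
  move=> i j; rewrite /gi; case: pickP => [i' | none] /=.
    by rewrite !inE => /orP [/eqP [] | /eqP].
  by have := none i; rewrite !inE eqxx.
have gjE : forall i j, gj [set inl i; inr j] = j.
  move=> i j; rewrite /gj; case: pickP => [j' | none] /=.
    by rewrite !inE => /orP [/eqP | /eqP []].
  by have := none j; rewrite !inE eqxx orbT.
pose g : {ffun {set ('I_s + 'I_t)%type} -> {set 'I_n}} := [ffun e => h (fa (gi e)) (fb (gj e))].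
rewrite /has_berge /Kst_edges.
apply/existsP; exists phi; apply/existsP; exists g.
apply/and4P; split.
- apply/injectiveP => [[i|j] [i'|j']]; rewrite !ffunE.
  + by move/fa_inj => ->.
  + by move=> e; have := fab i j'; rewrite e eqxx.
  + by move=> e; have := fab i' j; rewrite e eqxx.
  + by move/fb_inj => ->.
- apply/dinjectiveP => e1 e2 /imset2P [i j _ _ ->] /imset2P [i' j' _ _ ->].
  rewrite !ffunE !giE !gjE => /hinj [] // /fa_inj -> /fb_inj -> //.
- apply/forallP => e; apply/implyP => /imset2P [i j _ _ ->].
  rewrite ffunE giE gjE; by case/andP: (hH _ _ (faA i) (fbB j)).
- apply/forallP => e; apply/implyP => /imset2P [i j _ _ ->].
  rewrite ffunE giE gjE.
  case/andP: (hH _ _ (faA i) (fbB j)) => _ sub.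
  apply: subset_trans sub; apply/subsetP => y /imsetP [x xe ->].
  move: xe; rewrite !inE => /orP [/eqP -> | /eqP ->]; rewrite ffunE /= eqxx ?orbT //.
Qed.

Lemma sdr (X Y : finType) (y0 : Y) (S : X -> {set Y}) : forall k (I : {set X}),
  #|I| = k -> (forall i, i \in I -> k <= #|S i|) ->
  exists g : X -> Y, (forall i, i \in I -> g i \in S i) /\ {in I &, injective g}.
Proof.
elim => [|k IH] I hI hS.
  exists (fun _ => y0); split.
    by move=> i iI; have := card0_eq hI i; rewrite iI.
  by move=> i j iI; have := card0_eq hI i; rewrite iI.
have : 0 < #|I| by rewrite hI.
case/card_gt0P => i0 i0I.
have hI' : #|I :\ i0| = k by have := cardsD1 i0 I; rewrite i0I hI add1n; case.
have [g' [g'S g'inj]] : exists g : X -> Y, (forall i, i \in I :\ i0 -> g i \in S i)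
    /\ {in I :\ i0 &, injective g}.
  apply: IH => // i; rewrite inE => /andP [_ iI]; have := hS i iI; lia.
have : ~~ (S i0 \subset g' @: (I :\ i0)).
  apply/negP => sub; have := subset_leq_card sub.
  have := leq_imset_card g' (I :\ i0); have := hS i0 i0I; rewrite hI'; lia.
case/subsetPn => y yS yN.
exists (fun x => if x == i0 then y else g' x); split.
  move=> i iI; case: eqP => [-> //| ne]; apply: g'S; rewrite !inE iI andbT; exact/eqP.
move=> i j iI jI /=.
case: eqP => [-> | ne1]; case: eqP => [-> | ne2] //.
- move=> e; move: yN; rewrite e; case/negP; apply: imset_f.
  by rewrite !inE jI andbT; apply/eqP.
- move=> e; move: yN; rewrite -e; case/negP; apply: imset_f.
  by rewrite !inE iI andbT; apply/eqP.
- apply: g'inj; rewrite !inE ?iI ?jI andbT; exact/eqP.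
Qed.

Lemma shrink (T : finType) (B : {set T}) k : k <= #|B| ->
  exists B' : {set T}, B' \subset B /\ #|B'| = k.
Proof.
move=> hk.
have : 0 < #|[set B' : {set T} | B' \subset B & #|B'| == k]| by rewrite cards_draws bin_gt0.
case/card_gt0P => B'; rewrite inE => /andP [sub /eqP c]; by exists B'.
Qed.

Lemma set2_eq (T : finType) (A B : {set T}) (a b a' b' : T) :
  (forall x, x \in A -> x \in B -> False) ->
  a \in A -> b \in B -> a' \in A -> b' \in B ->
  [set a; b] = [set a'; b'] -> a = a' /\ b = b'.
Proof.
move=> dis aA bB a'A b'B e.
have ha : a \in [set a'; b'] by rewrite -e !inE eqxx.
have hb : b \in [set a'; b'] by rewrite -e !inE eqxx orbT.
move: ha hb; rewrite !inE => /orP [/eqP ha | /eqP ha] /orP [/eqP hb | /eqP hb].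
- by subst; case: (dis _ a'A bB).
- by [].
- by subst; case: (dis _ aA b'B).
- by subst; case: (dis _ aA b'B).
Qed.

Lemma disj_of (T : finType) (A B : {set T}) :
  (forall x, x \in A -> x \in B -> False) -> [disjoint A & B].
Proof.
move=> h; rewrite -setI_eq0; apply/eqP/setP => x; rewrite !inE.
by apply/negP => /andP [xA xB]; case: (h x xA xB).
Qed.

Lemma set2C (T : finType) (x y : T) : [set x; y] = [set y; x].
Proof. by apply/setP => z; rewrite !inE orbC. Qed.

Lemma fat_part n s t (H : {set {set 'I_n}}) :
  (0 < s)%N -> (0 < t)%N -> ~~ has_berge (Kst_edges s t) H ->
  let adjF := fun x y : 'I_n => (x != y) && (s * t <= #|[set e in H | [set x; y] \subset e]|) in
  [/\ symmetric adjF, irreflexive adjF & Kfree adjF s t setT].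
Proof.
move=> hs ht nb adjF; split.
- move=> x y; rewrite /adjF eq_sym set2C //.
- by move=> x; rewrite /adjF eqxx.
move=> A B _ _ cA cB hAB.
have [B' [B'B cB']] := shrink cB.
have dis : forall x, x \in A -> x \in B' -> False.
  move=> x xA xB; have := hAB x x xA (subsetP B'B x xB); by rewrite /adjF eqxx.
have hc : #|setX A B'| = s * t by rewrite cardsX cA cB'.
have hS : forall p, p \in setX A B' -> s * t <= #|[set e in H | [set p.1; p.2] \subset e]|.
  move=> [a b]; rewrite inE /= => /andP [aA bB].
  by have := hAB a b aA (subsetP B'B b bB); case/andP.
have [g [gS ginj]] := sdr set0 hc hS.
move/negP: nb; apply.
apply: (@berge_of n H s t A B' (fun a b => g (a, b))) => //.
- exact: disj_of.
- move=> a b aA bB; have := gS (a, b); rewrite !inE aA bB => /(_ isT).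
  by rewrite /=.
- move=> a b a' b' aA bB a'A b'B e.
  have := ginj (a, b) (a', b'); rewrite !inE aA bB a'A b'B => /(_ isT isT e).
  by case.
Qed.

Lemma thin_part n s t (H : {set {set 'I_n}}) (adjF : rel 'I_n) :
  (0 < s)%N -> (0 < t)%N -> ~~ has_berge (Kst_edges s t) H ->
  (forall x y, x != y -> ~~ adjF x y -> #|[set e in H | [set x; y] \subset e]| < s * t) ->
  exists adj2 : rel 'I_n, [/\ symmetric adj2, irreflexive adj2, Kfree adj2 s t setT &
    #|[set e in H | ~~ clique adjF e]| <= s * t * #|cliques adj2 2 setT| ].
Proof.
move=> hs ht nb hthin.
set H2 := [set e in H | ~~ clique adjF e].
pose thin (e : {set 'I_n}) := [pick p : 'I_n * 'I_n | (p.1 \in e) && (p.2 \in e) &&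
    (p.1 != p.2) && ~~ adjF p.1 p.2].
pose P e := if thin e is Some p then [set p.1; p.2] else set0.
have PE : forall e, e \in H2 -> exists x y, [/\ P e = [set x; y], x \in e, y \in e,
    x != y & ~~ adjF x y].
  move=> e; rewrite inE => /andP [eH ncl].
  rewrite /P /thin; case: pickP => [[x y] /= /andP [/andP [/andP [xe ye] xy] nxy] | none].
    by exists x, y.
  exfalso; move/negP: ncl; apply; apply/forallP => x; apply/implyP => xe.
  apply/forallP => y; apply/implyP => ye; apply/implyP => xy.
  by have := none (x, y); rewrite /= xe ye xy /=; case: (adjF x y).
set G2 := P @: H2.
pose adj2 := fun x y : 'I_n => (x != y) && ([set x; y] \in G2).
exists adj2; split.
- by move=> x y; rewrite /adj2 eq_sym set2C.
- by move=> x; rewrite /adj2 eqxx.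
- move=> A B _ _ cA cB hAB.
  have [B' [B'B cB']] := shrink cB.
  have dis : forall x, x \in A -> x \in B' -> False.
    move=> x xA xB; have := hAB x x xA (subsetP B'B x xB); by rewrite /adj2 eqxx.
  pose h a b := odflt set0 [pick e in H2 | P e == [set a; b]].
  have hh : forall a b, a \in A -> b \in B' -> h a b \in H2 /\ P (h a b) = [set a; b].
    move=> a b aA bB; have := hAB a b aA (subsetP B'B b bB).
    case/andP => _ /imsetP [e0 e0H e0P].
    rewrite /h; case: pickP => [e /andP [eH /eqP eP] | none] /=; first by [].
    by have := none e0; rewrite e0H -e0P eqxx.
  move/negP: nb; apply.
  apply: (@berge_of n H s t A B' h) => //.
  + exact: disj_of.
  + move=> a b aA bB; have [eH2 eP] := hh a b aA bB.
    have [x [y [ePxy xe ye _ _]]] := PE _ eH2.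
    move: (eH2); rewrite inE => /andP [-> _] /=.
    rewrite -eP ePxy; apply/subsetP => z; rewrite !inE => /orP [/eqP -> | /eqP ->] //.
  + move=> a b a' b' aA bB a'A b'B e.
    have [_ e1] := hh a b aA bB; have [_ e2] := hh a' b' a'A b'B.
    apply: (set2_eq dis) => //; by rewrite -e1 -e2 e.
- have sub : H2 \subset \bigcup_(Q in G2) [set e in H2 | P e == Q].
    apply/subsetP => e eH2; apply/bigcupP; exists (P e); first exact: imset_f.
    by rewrite inE eH2 eqxx.
  apply: leq_trans (subset_leq_card sub) _.
  apply: leq_trans (card_bigcup_le _ _) _.
  apply: leq_trans (_ : \sum_(Q in G2) (s * t) <= _).
    apply: leq_sum => Q /imsetP [e0 e0H ->].
    have [x [y [ePxy _ _ xy nxy]]] := PE _ e0H.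
    apply: ltnW; apply: leq_trans (hthin x y xy nxy).
    apply: subset_leq_card; apply/subsetP => e; rewrite !inE => /andP [/andP [eH ncl] /eqP eP].
    rewrite eH /= -ePxy -eP.
    have eH2 : e \in H2 by rewrite inE eH ncl.
    have [x' [y' [ePxy' xe ye _ _]]] := PE e eH2.
    rewrite ePxy'; apply/subsetP => z; rewrite !inE => /orP [/eqP -> | /eqP ->] //.
  rewrite sum_nat_const mulnC leq_mul2l; apply/orP; right.
  apply: subset_leq_card; apply/subsetP => Q /imsetP [e0 e0H ->].
  have [x [y [ePxy _ _ xy nxy]]] := PE _ e0H.
  rewrite inE ePxy subsetT cards2 xy /=.
  have QG : [set x; y] \in G2 by rewrite -ePxy; apply: imset_f.
  apply/forallP => u; apply/implyP => uQ; apply/forallP => v; apply/implyP => vQ.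
  apply/implyP => uv; rewrite /adj2 uv /=.
  move: uQ vQ uv; rewrite !inE => /orP [] /eqP -> /orP [] /eqP -> //; rewrite ?eqxx //.
  by rewrite set2C.
Qed.

Lemma hyper_bound n r s t (H : {set {set 'I_n}}) :
  (0 < s)%N -> (0 < t)%N -> uniform r H -> ~~ has_berge (Kst_edges s t) H ->
  exists adj1 adj2 : rel 'I_n,
    [/\ symmetric adj1, irreflexive adj1 & Kfree adj1 s t setT] /\
    [/\ symmetric adj2, irreflexive adj2 & Kfree adj2 s t setT] /\
    #|H| <= #|cliques adj1 r setT| + s * t * #|cliques adj2 2 setT|.
Proof.
move=> hs ht hu nb.
have [s1 i1 k1] := fat_part hs ht nb.
set adjF := (fun x y : 'I_n => _) in s1 i1 k1.
have hthin : forall x y, x != y -> ~~ adjF x y ->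
    #|[set e in H | [set x; y] \subset e]| < s * t.
  by move=> x y xy; rewrite /adjF xy /= -ltnNge.
have [adj2 [s2 i2 k2 b2]] := thin_part hs ht nb hthin.
exists adjF, adj2; split; first by []. split; first by [].
have sub : H \subset [set e in H | clique adjF e] :|: [set e in H | ~~ clique adjF e].
  apply/subsetP => e eH; rewrite !inE eH /=; by case: (clique adjF e).
apply: leq_trans (subset_leq_card sub) _.
apply: leq_trans (leq_card_setU _ _) _.
apply: leq_add => //.
apply: subset_leq_card; apply/subsetP => e; rewrite !inE => /andP [eH cl].
rewrite subsetT cl andbT /=.
by move/forallP: hu => /(_ e); rewrite eH.
Qed.

Lemma fexp_mono r s : (2 <= r)%N -> (r <= s)%N -> (fexp 2 s <= fexp r s)%R.
Proof.
move=> h2 hrs.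
have hr : (2 <= INR r)%R by apply: (le_INR 2); apply/leP.
have hs : (INR r <= INR s)%R by apply: le_INR; apply/leP.
have i2 : INR 2 = 2%R by simpl; ring.
have e : (fexp r s - fexp 2 s = (INR r - 2) * (2 * INR s - INR r - 1) * / (2 * INR s))%R.
  rewrite /fexp i2; field; lra.
have : (0 <= (INR r - 2) * (2 * INR s - INR r - 1) * / (2 * INR s))%R.
  apply: Rmult_le_pos; first (apply: Rmult_le_pos; lra).
  apply: Rlt_le; apply: Rinv_0_lt_compat; lra.
lra.
Qed.

Theorem theorem1p6 (r s t : nat) :
  (3 <= r)%N -> (r <= s)%N -> (s <= t)%N ->
  exists (C : R) (N : nat), (0 < C)%R /\
    forall n : nat, (N <= n)%N ->
      (INR (ex_berge r (Kst_edges s t) n)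
        <= C * Rpower (INR n) (INR r - INR r * (INR r - 1) / (2 * INR s)))%R.
Proof.
move=> h3 hrs hst.
have hs : (0 < s)%N by lia.
have ht : (0 < t)%N by lia.
have hr0 : (0 < r)%N by lia.
have h2s : (2 <= s)%N by lia.
have h2r : (2 <= r)%N by lia.
have [C1 [hC1 b1]] := AS t hr0 hrs.
have [C2 [hC2 b2]] := AS t (isT : (0 < 2)%N) h2s.
have hst0 : (0 <= INR (s * t))%R by apply: pos_INR.
exists (C1 + INR (s * t) * C2)%R, 1%N; split.
  have : (0 <= INR (s * t) * C2)%R by apply: Rmult_le_pos; lra.
  lra.
move=> n hn.
change (INR r - INR r * (INR r - 1) / (2 * INR s))%R with (fexp r s).
have hnR : (1 <= INR n)%R by apply: (le_INR 1); apply/leP.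
have hp := Rpower_pos (INR n) (fexp r s).
rewrite /ex_berge.
apply: (big_ind (fun x => INR x <= (C1 + INR (s * t) * C2) * Rpower (INR n) (fexp r s))%R).
- simpl; apply: Rmult_le_pos; last lra.
  have : (0 <= INR (s * t) * C2)%R by apply: Rmult_le_pos; lra.
  lra.
- by move=> x y hx hy; case: (leqP x y).
move=> H /andP [hu nb].
have [adj1 [adj2 [[s1 i1 k1] [[s2 i2 k2] hb]]]] := hyper_bound hs ht hu nb.
have c1 := b1 n adj1 setT s1 i1 k1.
have c2 := b2 n adj2 setT s2 i2 k2.
rewrite cardsT card_ord in c1 c2.
have hm := Rle_Rpower _ _ _ hnR (fexp_mono h2r hrs).
have hbR : (INR #|H| <= INR (#|cliques adj1 r setT| + s * t * #|cliques adj2 2 setT|))%R.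
  by apply: le_INR; apply/leP.
apply: Rle_trans hbR _.
rewrite plus_INR mult_INR.
have : (INR (s * t) * INR #|cliques adj2 2 setT|
    <= INR (s * t) * (C2 * Rpower (INR n) (fexp r s)))%R.
  apply: Rmult_le_compat_l => //; apply: Rle_trans c2 _.
  apply: Rmult_le_compat_l; lra.
nra.
Qed.
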